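(* Let $X\xrightarrow{f}Y\xrightarrow{g}Z$ be continuous maps between topological spaces, with $f$ surjective. If $f$ and $g\circ f$ are Serre fibrations, then $g$ is a Serre fibration.
   Context: A map $p\colon E\to B$ is a Serre fibration if for every $n\geq1$ and every commutative square with top map $[0,1]^{n-1}\times\{0\}\to E$, bottom map $[0,1]^n\to B$ and left map the inclusion, there is a map $[0,1]^n\to E$ making both triangles commute. *)

(* Defs.v *)
From HB Require Import structures.
From mathcomp Require Import all_boot all_order all_algebra.
From mathcomp Require Import all_classical all_reals all_analysis.
From mathcomp Require Import Rstruct Rstruct_topology.
Set Implicit Arguments. Unset Strict Implicit. Unset Printing Implicit Defensive.
Import Order.TTheory GRing.Theory Num.Theory.
Local Open Scope classical_set_scope.
Local Open Scope ring_scope.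

Definition cube (m : nat) : set 'rV[Rdefinitions.R]_m :=
  [set x | forall i, 0 <= x ord0 i <= 1].
Arguments cube : clear implicits.

Definition bottom_face (k : nat) : set 'rV[Rdefinitions.R]_k.+1 :=
  [set x | cube k.+1 x /\ x ord0 ord_max = 0].
Arguments bottom_face : clear implicits.

(* Maps out of a subspace A of the ambient space are represented by functions
   on the ambient space that are continuous within A; only their values on A
   matter. *)
Definition serre_fibration (E B : topologicalType) (p : E -> B) : Prop :=
  forall (k : nat) (top : 'rV[Rdefinitions.R]_k.+1 -> E)
         (bot : 'rV[Rdefinitions.R]_k.+1 -> B),
    {within bottom_face k, continuous top} ->
    {within cube k.+1, continuous bot} ->
    (forall x, bottom_face k x -> p (top x) = bot x) ->
    exists L : 'rV[Rdefinitions.R]_k.+1 -> E,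
      [/\ {within cube k.+1, continuous L},
          (forall x, bottom_face k x -> L x = top x) &
          (forall x, cube k.+1 x -> p (L x) = bot x)].

(* Main.v *)
Require Import Defs.
From mathcomp Require Import all_boot all_classical all_analysis.
From mathcomp Require Import all_order all_algebra all_reals Rstruct Rstruct_topology.
Import Order.TTheory GRing.Theory Num.Theory.
Local Open Scope classical_set_scope.
Local Open Scope ring_scope.

Lemma mx_cont (T : topologicalType) m n (F : T -> 'M[Rdefinitions.R]_(m,n)) :
  (forall i j, continuous (fun x => F x i j)) -> continuous F.
Proof.
move=> H x; apply/cvg_mx_entourageP => A entA.
have : \forall y \near x, forall i j, (F x i j, F y i j) \in A.
  apply: (@filter_forall _ _ (fun i y => forall j, (F x i j, F y i j) \in A)) => i.
  apply: (@filter_forall _ _ (fun j y => (F x i j, F y i j) \in A)) => j.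
  move: (H i j x _ (nbhs_entourage (F x i j) entA)) => /= hh.
  have hh' : \forall y \near x, xsection A (F x i j) (F y i j) := hh.
  apply: (filterS _ hh'). move=> y /xsectionP. by rewrite inE.
by [].
Qed.

Lemma within_comp (T U V : topologicalType) (A : set T) (B : set U)
  (s : T -> U) (L : U -> V) :
  continuous s -> (forall x, A x -> B (s x)) ->
  {within B, continuous L} -> {within A, continuous (L \o s)}.
Proof.
move=> cs sAB cL; apply/subspace_continuousP => x Ax.
move/subspace_continuousP: cL => /(_ _ (sAB _ Ax)) cL.
apply: cvg_trans cL => W hW.
have := cs x _ hW.
rewrite /= /within /= => h.
have h' : nbhs x (fun z => B (s z) -> W (L (s z))) := h.
have : nbhs x (fun z => A z -> W (L (s z))).
  by apply: (filterS _ h') => z /= hz Az; exact: hz (sAB _ Az).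
exact.
Qed.

Lemma within_post (T U V : topologicalType) (A : set T) (L : T -> U) (f : U -> V) :
  {within A, continuous L} -> continuous f -> {within A, continuous (f \o L)}.
Proof. move=> cL cf x; exact: (@continuous_comp (subspace A) U V (from_subspace A L) f x (cL x) (cf _)). Qed.

Definition sig_ k (y : 'rV[Rdefinitions.R]_k.+1) : 'rV[Rdefinitions.R]_k.+1 :=
  \row_i (if i == ord_max then 1 else y ord0 i).
Definition tau_ k (z : 'rV[Rdefinitions.R]_k.+1) : 'rV[Rdefinitions.R]_k.+1 :=
  \row_i (if i == ord_max then 0 else z ord0 ord_max * z ord0 i).

Arguments sig_ {k}.
Arguments tau_ {k}.

Lemma sig_cont k : continuous (@sig_ k).
Proof.
apply: mx_cont => i j.
have -> : (fun x => sig_ x i j) = (fun x => if j == ord_max then 1 else x ord0 j).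
  by apply: funext => x; rewrite mxE.
case: (j == ord_max); [exact: cst_continuous | exact: coord_continuous].
Qed.

Lemma tau_cont k : continuous (@tau_ k).
Proof.
apply: mx_cont => i j.
have -> : (fun x => tau_ x i j) =
   (fun x => if j == ord_max then 0 else x ord0 ord_max * x ord0 j).
  by apply: funext => x; rewrite mxE.
case: (j == ord_max); first exact: cst_continuous.
move=> x; apply: continuousM; exact: coord_continuous.
Qed.

Lemma sig_face k y : bottom_face k y -> cube k.+1 (sig_ y).
Proof.
move=> [cy _] i; rewrite mxE; case: ifP => _ //; by rewrite ler01 lexx.
Qed.

Lemma tau_cube k z : cube k.+1 z -> bottom_face k (tau_ z).
Proof.
move=> cz; split; last by rewrite mxE eqxx.
move=> i; rewrite mxE; case: ifP => _; first by rewrite lexx ler01.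
have /andP[a b] := cz ord_max; have /andP[c d] := cz i.
by rewrite mulr_ge0 ?mulr_ile1.
Qed.

Lemma tau_sig k y : bottom_face k y -> tau_ (sig_ y) = y.
Proof.
move=> [_ h]; apply/rowP => i; rewrite !mxE eqxx.
by case: eqP => [->|_]; [rewrite h | rewrite mul1r].
Qed.

Lemma tau_face0 k y : bottom_face k y -> tau_ y = 0.
Proof.
move=> [_ h]; apply/rowP => i; rewrite !mxE h mul0r; by case: ifP.
Qed.

Theorem propositionA1 (X Y Z : topologicalType) (f : X -> Y) (g : Y -> Z) :
  continuous f -> continuous g ->
  (forall y : Y, exists x : X, f x = y) ->
  serre_fibration f -> serre_fibration (g \o f) ->
  serre_fibration g.
Proof.
move=> cf cg fsurj sf sgf k top bot ctop cbot hcomm.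
have [x0 hx0] := fsurj (top 0).
have e1 : forall y, bottom_face k y -> f x0 = (top \o @tau_ k) y.
  by move=> y hy; rewrite /= tau_face0.
have c0 : {within bottom_face k, continuous (fun _ : 'rV[Rdefinitions.R]_k.+1 => x0)}.
  by apply: continuous_subspaceT; exact: cst_continuous.
have [L1 [cL1 L1face L1cube]] := sf k (fun _ => x0) (top \o @tau_ k) c0
   (@within_comp _ _ _ _ _ (@tau_ k) top (@tau_cont k) (@tau_cube k) ctop) e1.
have e2 : forall y, bottom_face k y -> (g \o f) ((L1 \o @sig_ k) y) = bot y.
  by move=> y hy; rewrite /= (L1cube _ (@sig_face k y hy)) /= (@tau_sig k y hy) hcomm.
have [L2 [cL2 L2face L2cube]] := sgf k (L1 \o @sig_ k) bot
   (@within_comp _ _ _ _ _ (@sig_ k) L1 (@sig_cont k) (@sig_face k) cL1) cbot e2.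
exists (f \o L2); split.
- exact: within_post.
- by move=> y hy; rewrite /= L2face //= (L1cube _ (@sig_face k y hy)) /= (@tau_sig k y hy).
- by move=> y hy; exact: L2cube.
Qed.
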